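(* Let $\eta\in\mathbb{R}\setminus\{0\}$ and let $\varepsilon',\ell,m,M>0$. There exists $\xi_0=\xi_0(|\eta|,\varepsilon',\ell,m,M)\in\mathbb{N}^*$ with the following property. Let $X\subseteq\mathbb{R}^2$ be non-empty, let $\varepsilon>0$, and let $\gamma=\bigcup_{i\in S}I_i$ be a union of segments in $\mathbb{R}^2$ such that $\gamma$ is $\varepsilon$-dense in $X$, every $I_i$ has slope of absolute value less than $M$, and every $I_i$ has length greater than $\ell$. Then for every integer $\xi\ge\xi_0$ there is a subset $\gamma'\subseteq J_{\eta,\xi}(\gamma)$ which is a union of segments, is $(\varepsilon+\varepsilon')$-dense in $\mathrm{Str}(X,(0,\eta))$, whose segments all have slopes of absolute value greater than $m$, and whose segments all have length greater than $|\eta|$.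
   Context: For $X,Y\subseteq\mathbb{R}^2$ and $\varepsilon>0$, $X$ is $\varepsilon$-dense in $Y$ if $Y\subseteq B_\varepsilon(X)$, the open $\varepsilon$-neighbourhood of $X$. For $v\in\mathbb{R}^2\setminus\{0\}$, $\mathrm{Str}(X,v)=X+[-v,v]$ (Minkowski sum with the segment from $-v$ to $v$). For $\xi\in\mathbb{N}^*$, $\phi_\xi:\mathbb{R}\to[-1,1]$ is the triangle wave $\phi_\xi(x)=(-1)^{z+1}(4\xi x-2z-1)$ for $z\in\mathbb{Z}$, $x\in[\frac{z}{2\xi},\frac{z+1}{2\xi})$, and for $\eta\ne0$, $J_{\eta,\xi}(x,y)=(x,y+\eta\phi_\xi(x))$, a homeomorphism of $\mathbb{R}^2$. *)

(* Defs.v *)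
From Stdlib Require Import Reals Lra.
Open Scope R_scope.

Definition pt := (R * R)%type.

Definition dist2 (p q : pt) : R :=
  sqrt ((fst p - fst q)^2 + (snd p - snd q)^2).

Definition seg := (pt * pt)%type.

Definition seg_pts (s : seg) : pt -> Prop :=
  fun x => exists t, 0 <= t <= 1 /\
    x = (fst (fst s) + t * (fst (snd s) - fst (fst s)),
         snd (fst s) + t * (snd (snd s) - snd (fst s))).

Definition seg_len (s : seg) : R := dist2 (fst s) (snd s).

Definition slope_abs_lt (s : seg) (M : R) : Prop :=
  let dx := fst (snd s) - fst (fst s) in
  let dy := snd (snd s) - snd (fst s) in
  dx <> 0 /\ Rabs (dy / dx) < M.

(* |slope| > m  (vertical segments have infinite slope) *)
Definition slope_abs_gt (s : seg) (m : R) : Prop :=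
  let dx := fst (snd s) - fst (fst s) in
  let dy := snd (snd s) - snd (fst s) in
  dx = 0 \/ m < Rabs (dy / dx).

Definition union_segs (F : seg -> Prop) : pt -> Prop :=
  fun x => exists s, F s /\ seg_pts s x.

Definition eps_dense (X : pt -> Prop) (eps : R) (Y : pt -> Prop) : Prop :=
  forall y, Y y -> exists x, X x /\ dist2 x y < eps.

Definition Str (X : pt -> Prop) (v : pt) : pt -> Prop :=
  fun y => exists x t, X x /\ -1 <= t <= 1 /\
    y = (fst x + t * fst v, snd x + t * snd v).

(* floor via up: up r - 1 <= r < up r *)
Definition floorZ (r : R) : Z := (up r - 1)%Z.

Definition phi (xi : nat) (x : R) : R :=
  let z := floorZ (2 * INR xi * x) in
  powerRZ (-1) (z + 1) * (4 * INR xi * x - 2 * IZR z - 1).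

Definition J (eta : R) (xi : nat) (p : pt) : pt :=
  (fst p, snd p + eta * phi xi (fst p)).

Definition image (f : pt -> pt) (A : pt -> Prop) : pt -> Prop :=
  fun y => exists x, A x /\ y = f x.

(* Main.v *)
Require Import Defs.
From Stdlib Require Import Reals Lra Lia ZArith.
Open Scope R_scope.

Definition Pt (A B : pt) (t : R) : pt :=
  (fst A + t * (fst B - fst A), snd A + t * (snd B - snd A)).

Lemma floor_spec W : exists z, IZR z <= W < IZR z + 1.
Proof.
  destruct (archimed W) as [H1 H2]. exists (up W - 1)%Z.
  rewrite minus_IZR. simpl. lra.
Qed.

Lemma cell_select Lo Hi W : Lo <= W <= Hi -> 2 <= Hi - Lo ->
  exists z, Lo <= IZR z /\ IZR z + 1 <= Hi /\ W - 2 <= IZR z /\ IZR z + 1 <= W + 2.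
Proof.
  intros HW HL. destruct (floor_spec W) as [z0 Hz].
  destruct (Rle_dec Lo (IZR z0)) as [H1|H1].
  - destruct (Rle_dec (IZR z0 + 1) Hi) as [H2|H2].
    + exists z0. lra.
    + exists (z0 - 1)%Z. rewrite minus_IZR. simpl. lra.
  - exists (z0 + 1)%Z. rewrite plus_IZR. simpl. lra.
Qed.

Lemma sig_sq z : powerRZ (-1) z * powerRZ (-1) z = 1.
Proof.
  rewrite <- powerRZ_mult. replace (-1 * -1) with 1 by ring. apply powerRZ_R1.
Qed.

Lemma sig_abs z : Rabs (powerRZ (-1) z) = 1.
Proof.
  pose proof (sig_sq z) as H. pose proof (Rabs_pos (powerRZ (-1) z)).
  assert (Rabs (powerRZ (-1) z) * Rabs (powerRZ (-1) z) = 1) as H'.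
  { rewrite <- Rabs_mult, H. apply Rabs_R1. }
  nra.
Qed.

Lemma floorZ_eq r z : IZR z <= r < IZR z + 1 -> floorZ r = z.
Proof.
  intros H. unfold floorZ.
  assert (E: (z + 1)%Z = up r). { apply tech_up; rewrite plus_IZR; simpl; lra. }
  rewrite <- E. lia.
Qed.

Lemma phi_lin xi z x : IZR z <= 2 * INR xi * x <= IZR z + 1 ->
  phi xi x = powerRZ (-1) (z + 1) * (4 * INR xi * x - 2 * IZR z - 1).
Proof.
  intros H. unfold phi.
  destruct (Rlt_dec (2 * INR xi * x) (IZR z + 1)) as [H1|H1].
  - rewrite (floorZ_eq _ z) by lra. reflexivity.
  - rewrite (floorZ_eq _ (z + 1)) by (rewrite plus_IZR; simpl; lra).
    rewrite powerRZ_add by lra. rewrite plus_IZR. simpl.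
    assert (E: 4 * INR xi * x = 2 * (IZR z + 1)) by lra. rewrite E. ring.
Qed.

Lemma minkowski a b c d :
  sqrt ((a + b) ^ 2 + (c + d) ^ 2) <= sqrt (a ^ 2 + c ^ 2) + sqrt (b ^ 2 + d ^ 2).
Proof.
  pose proof (sqrt_pos (a^2 + c^2)) as HX. pose proof (sqrt_pos (b^2+d^2)) as HY.
  pose proof (sqrt_sqrt (a^2+c^2)) as EX. pose proof (sqrt_sqrt (b^2+d^2)) as EY.
  set (X := sqrt (a^2+c^2)) in *. set (Y := sqrt (b^2+d^2)) in *.
  assert (EX' : X * X = a^2 + c^2) by (apply EX; nra).
  assert (EY' : Y * Y = b^2 + d^2) by (apply EY; nra).
  assert (CS : a*b + c*d <= X*Y).
  { destruct (Rle_dec (a*b+c*d) 0). - nra.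
    - assert ((a*b+c*d)^2 <= (X*Y)^2).
      { replace ((X*Y)^2) with ((X*X)*(Y*Y)) by ring. rewrite EX', EY'.
        pose proof (pow2_ge_0 (a*d - b*c)). nra. }
      assert (0 <= X*Y) by (apply Rmult_le_pos; lra).
      destruct (Rle_dec (a*b+c*d) (X*Y)) as [|Hc]; [lra|].
      exfalso. apply Rnot_le_lt in Hc. nra. }
  rewrite <- (sqrt_pow2 (X + Y)) by lra.
  apply sqrt_le_1_alt. nra.
Qed.

Lemma sqrt_sum_le u v : sqrt (u ^ 2 + v ^ 2) <= Rabs u + Rabs v.
Proof.
  rewrite <- (sqrt_pow2 (Rabs u + Rabs v)) by (pose proof (Rabs_pos u); pose proof (Rabs_pos v); lra).
  apply sqrt_le_1_alt. rewrite <- (pow2_abs u), <- (pow2_abs v).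
  pose proof (Rabs_pos u); pose proof (Rabs_pos v). nra.
Qed.

Lemma tau_ok a dx x : dx <> 0 -> Rmin a (a + dx) <= x <= Rmax a (a + dx) ->
  0 <= (x - a) / dx <= 1.
Proof.
  intros Hd H. assert (E : x - a = ((x - a) / dx) * dx) by (field; auto).
  set (t := (x - a) / dx) in *. unfold Rmin, Rmax in H.
  destruct (Rle_dec a (a + dx)); destruct (Rtotal_order dx 0) as [Hn|[Hz|Hp]];
   try lra; split; nra.
Qed.

Lemma range_ok a dx t : 0 <= t <= 1 ->
  Rmin a (a + dx) <= a + t * dx <= Rmax a (a + dx) /\
  Rmax a (a + dx) - Rmin a (a + dx) = Rabs dx.
Proof.
  intros Ht. unfold Rmin, Rmax, Rabs.
  destruct (Rle_dec a (a + dx)); destruct (Rcase_abs dx); split; try split; nra.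
Qed.

Lemma keyJ eta xi A B z t0 t1 lam :
  2 * INR xi * (fst A + t0 * (fst B - fst A)) = IZR z ->
  2 * INR xi * (fst A + t1 * (fst B - fst A)) = IZR z + 1 ->
  0 <= lam <= 1 ->
  (fst (J eta xi (Pt A B t0)) + lam * (fst (J eta xi (Pt A B t1)) - fst (J eta xi (Pt A B t0))),
   snd (J eta xi (Pt A B t0)) + lam * (snd (J eta xi (Pt A B t1)) - snd (J eta xi (Pt A B t0))))
  = J eta xi (Pt A B (t0 + lam * (t1 - t0))).
Proof.
  intros H0 H1 Hl. unfold J, Pt; simpl.
  assert (E : 2 * INR xi * (fst A + (t0 + lam * (t1 - t0)) * (fst B - fst A)) = IZR z + lam).
  { transitivity (2 * INR xi * (fst A + t0 * (fst B - fst A)) + lam *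
      (2 * INR xi * (fst A + t1 * (fst B - fst A)) - 2 * INR xi * (fst A + t0 * (fst B - fst A)))).
    ring. rewrite H0, H1. ring. }
  rewrite (phi_lin xi z (fst A + t0 * (fst B - fst A))) by lra.
  rewrite (phi_lin xi z (fst A + t1 * (fst B - fst A))) by lra.
  rewrite (phi_lin xi z (fst A + (t0 + lam * (t1 - t0)) * (fst B - fst A))) by lra.
  f_equal; ring.
Qed.

Lemma slope_part eta xi A B z t0 t1 M :
  (1 <= INR xi) -> 2 * M < 4 * INR xi * Rabs eta ->
  2 * INR xi * (fst A + t0 * (fst B - fst A)) = IZR z ->
  2 * INR xi * (fst A + t1 * (fst B - fst A)) = IZR z + 1 ->
  slope_abs_lt (A, B) M ->
  let s := (J eta xi (Pt A B t0), J eta xi (Pt A B t1)) in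
  4 * INR xi * Rabs eta - M < Rabs ((snd (snd s) - snd (fst s)) / (fst (snd s) - fst (fst s)))
  /\ Rabs eta < seg_len s.
Proof.
  intros Hxi HM H0 H1 [Hdx Hq]. simpl in Hdx, Hq. cbv zeta.
  unfold seg_len, dist2, J, Pt; simpl.
  rewrite (phi_lin xi z (fst A + t0 * (fst B - fst A))) by lra.
  rewrite (phi_lin xi z (fst A + t1 * (fst B - fst A))) by lra.
  set (dx := fst B - fst A) in *. set (dy := snd B - snd A) in *.
  set (q := dy / dx) in *. set (sg := powerRZ (-1) (z + 1)).
  set (c := 2 * INR xi) in *.
  assert (Hdy : dy = q * dx) by (unfold q; field; auto).
  set (D := fst A + t1 * dx - (fst A + t0 * dx)).
  assert (HD : D * c = 1) by (unfold D; transitivity (c * (fst A + t1 * dx) - c * (fst A + t0 * dx)); [ring | lra]).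
  assert (HDn : D <> 0) by (intro E; rewrite E in HD; lra).
  assert (Hc : 0 < c) by (unfold c; lra).
  assert (HN : snd A + t1 * dy + eta * (sg * (4 * INR xi * (fst A + t1 * dx) - 2 * IZR z - 1)) -
     (snd A + t0 * dy + eta * (sg * (4 * INR xi * (fst A + t0 * dx) - 2 * IZR z - 1)))
     = (q + 2 * c * eta * sg) * D).
  { unfold D, c. rewrite Hdy. ring. }
  rewrite HN. fold D.
  replace ((q + 2 * c * eta * sg) * D / D) with (q + 2 * c * eta * sg) by (field; auto).
  pose proof (sig_abs (z + 1)) as Hs. fold sg in Hs.
  assert (Hab : Rabs (2 * c * eta * sg) = 2 * c * Rabs eta).
  { rewrite !Rabs_mult, Hs, (Rabs_right c), (Rabs_right 2) by lra. ring. }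
  assert (Htri : Rabs (2 * c * eta * sg) <= Rabs (q + 2 * c * eta * sg) + Rabs q).
  { replace (2 * c * eta * sg) with ((q + 2 * c * eta * sg) + - q) at 1 by ring.
    eapply Rle_trans; [apply Rabs_triang | rewrite Rabs_Ropp; lra]. }
  assert (Hbig : 4 * INR xi * Rabs eta - M < Rabs (q + 2 * c * eta * sg)).
  { unfold c in *. lra. }
  split; [exact Hbig|].
  set (Y := q + 2 * c * eta * sg) in *.
  assert (HDp : D = / c) by (field_simplify_eq; [lra | lra]).
  assert (HY : Rabs (Y * D) = Rabs Y / c).
  { rewrite Rabs_mult, HDp, Rabs_inv, (Rabs_right c) by lra. reflexivity. }
  assert (Hlt : Rabs eta < Rabs (Y * D)).
  { rewrite HY. apply (Rmult_lt_reg_r c); [lra|]. field_simplify; [|lra].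
    unfold c. pose proof (Rabs_pos eta). lra. }
  pose proof (Rabs_pos eta).
  rewrite <- (sqrt_pow2 (Rabs eta)) by lra.
  apply sqrt_lt_1_alt. split. nra.
  set (y0 := snd A + t0 * dy + eta * (sg * (4 * INR xi * (fst A + t0 * dx) - 2 * IZR z - 1))) in *.
  set (y1 := snd A + t1 * dy + eta * (sg * (4 * INR xi * (fst A + t1 * dx) - 2 * IZR z - 1))) in *.
  assert (Rabs eta ^ 2 < (Y * D) ^ 2) by (rewrite <- (pow2_abs (Y * D)); pose proof (Rabs_pos (Y*D)); nra).
  assert (E : y0 - y1 = - (Y * D)) by lra. rewrite E.
  pose proof (pow2_ge_0 (fst A + t0 * dx - (fst A + t1 * dx))). nra.
Qed.

Theorem mainTheorem11 :
  forall (a eps' l m M : R), 0 < a -> 0 < eps' -> 0 < l -> 0 < m -> 0 < M ->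
  exists xi0 : nat, (1 <= xi0)%nat /\
  forall (eta : R), Rabs eta = a ->
  forall (X : pt -> Prop) (eps : R) (F : seg -> Prop),
    (exists x, X x) -> 0 < eps ->
    eps_dense (union_segs F) eps X ->
    (forall s, F s -> slope_abs_lt s M) ->
    (forall s, F s -> l < seg_len s) ->
    forall xi : nat, (xi0 <= xi)%nat ->
    exists F' : seg -> Prop,
      (forall p, union_segs F' p -> image (J eta xi) (union_segs F) p) /\
      eps_dense (union_segs F') (eps + eps') (Str X (0, eta)) /\
      (forall s, F' s -> slope_abs_gt s m) /\
      (forall s, F' s -> Rabs eta < seg_len s).
Proof.
  intros a eps' l m M Ha He Hl Hm HM.
  assert (P1 : 0 < (2*M+m)/(4*a)) by (apply Rdiv_lt_0_compat; lra).
  assert (P2 : 0 < (1+M)/l) by (apply Rdiv_lt_0_compat; lra).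
  assert (P3 : 0 < (1+M)/eps') by (apply Rdiv_lt_0_compat; lra).
  set (K := (2*M+m)/(4*a) + (1+M)/l + (1+M)/eps' + 1).
  destruct (archimed K) as [HK _].
  assert (Hup : (0 <= up K)%Z) by (apply le_IZR; unfold K in *; lra).
  exists (S (Z.to_nat (up K))). split; [lia|].
  intros eta Heta X eps F _ Heps Hdense Hsl Hlen xi Hxi.
  assert (HxiK : K < INR xi).
  { apply le_INR in Hxi. rewrite S_INR, INR_IZR_INZ, Z2Nat.id in Hxi by exact Hup. lra. }
  assert (C1 : 2*M + m < 4*INR xi*a).
  { assert (T : (2*M+m)/(4*a) < INR xi) by (unfold K in *; lra).
    apply (Rmult_lt_compat_r (4*a)) in T; [|lra].
    replace ((2*M+m)/(4*a) * (4*a)) with (2*M+m) in T by (field; lra). lra. }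
  assert (C2 : 1 + M < INR xi * l).
  { assert (T : (1+M)/l < INR xi) by (unfold K in *; lra).
    apply (Rmult_lt_compat_r l) in T; [|lra].
    replace ((1+M)/l * l) with (1+M) in T by (field; lra). lra. }
  assert (C3 : 1 + M < INR xi * eps').
  { assert (T : (1+M)/eps' < INR xi) by (unfold K in *; lra).
    apply (Rmult_lt_compat_r eps') in T; [|lra].
    replace ((1+M)/eps' * eps') with (1+M) in T by (field; lra). lra. }
  assert (Hxi1 : 1 <= INR xi) by (unfold K in *; lra).
  exists (fun s => exists A B z t0 t1, F (A, B) /\ 0 <= t0 <= 1 /\ 0 <= t1 <= 1 /\
     2 * INR xi * (fst A + t0 * (fst B - fst A)) = IZR z /\
     2 * INR xi * (fst A + t1 * (fst B - fst A)) = IZR z + 1 /\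
     s = (J eta xi (Pt A B t0), J eta xi (Pt A B t1))).
  split; [|split; [|split]].
  - intros p [s [[A [B [z [t0 [t1 [HF [Ht0 [Ht1 [H0 [H1 Hs]]]]]]]]]] [lam [Hlam Hp]]]].
    subst s. cbn [fst snd] in Hp. rewrite (keyJ eta xi A B z t0 t1 lam H0 H1 Hlam) in Hp.
    exists (Pt A B (t0 + lam * (t1 - t0))). split; [|exact Hp].
    exists (A, B). split; [exact HF|].
    exists (t0 + lam * (t1 - t0)). split; [nra | reflexivity].
  - intros y [x [t [HX [Ht Hy]]]].
    destruct (Hdense x HX) as [g [[I [HI Hg]] Hd]]. destruct I as [A B].
    destruct Hg as [t0 [Ht0 Hg]]. cbn [fst snd] in Hg.
    pose proof (Hsl _ HI) as HS. unfold slope_abs_lt in HS. cbv zeta in HS. cbn [fst snd] in HS.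
    destruct HS as [Hdx Hq].
    pose proof (Hlen _ HI) as HL. unfold seg_len, dist2 in HL. cbn [fst snd] in HL.
    pose proof (sqrt_sum_le (fst A - fst B) (snd A - snd B)) as HL2.
    rewrite (Rabs_minus_sym (fst A)), (Rabs_minus_sym (snd A)) in HL2.
    set (dx := fst B - fst A) in *. set (dy := snd B - snd A) in *.
    set (q := dy / dx) in *.
    assert (Hdy : dy = q * dx) by (unfold q; field; auto).
    assert (Hady : Rabs dy <= M * Rabs dx).
    { rewrite Hdy, Rabs_mult. pose proof (Rabs_pos dx). nra. }
    assert (Hdxl : l < Rabs dx * (1 + M)) by lra.
    set (c := 2 * INR xi).
    assert (Hc : 0 < c) by (unfold c; lra).
    assert (Hcdx : 2 <= c * Rabs dx).
    { pose proof (Rabs_pos dx). unfold c.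
      assert (INR xi * l < INR xi * (Rabs dx * (1 + M))) by (apply Rmult_lt_compat_l; lra).
      nra. }
    destruct (range_ok (fst A) dx t0 Ht0) as [[Hu1 Hu2] Hw].
    set (u := fst A + t0 * dx) in *.
    set (lo := Rmin (fst A) (fst A + dx)) in *. set (hi := Rmax (fst A) (fst A + dx)) in *.
    destruct (cell_select (c * lo) (c * hi) (c * u)) as [z [Hz1 [Hz2 [Hz3 Hz4]]]].
    { split; apply Rmult_le_compat_l; lra. }
    { replace (c * hi - c * lo) with (c * (hi - lo)) by ring. rewrite Hw. lra. }
    set (sg := powerRZ (-1) (z + 1)).
    assert (Hsgt : -1 <= sg * t <= 1).
    { assert (Rabs (sg * t) <= 1) as Ha1.
      { rewrite Rabs_mult. unfold sg. rewrite sig_abs.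
        unfold Rabs; destruct (Rcase_abs t); lra. }
      revert Ha1. unfold Rabs; destruct (Rcase_abs (sg * t)); lra. }
    set (lam := (1 + sg * t) / 2).
    assert (Hlam : 0 <= lam <= 1) by (unfold lam; lra).
    set (t0' := (IZR z / c - fst A) / dx).
    set (t1' := ((IZR z + 1) / c - fst A) / dx).
    assert (H0' : 2 * INR xi * (fst A + t0' * (fst B - fst A)) = IZR z).
    { fold dx c. unfold t0'. field. split; lra. }
    assert (H1' : 2 * INR xi * (fst A + t1' * (fst B - fst A)) = IZR z + 1).
    { fold dx c. unfold t1'. field. split; lra. }
    assert (Ht0' : 0 <= t0' <= 1).
    { apply tau_ok; auto. fold lo hi. split.
      - apply (Rmult_le_reg_l c); [lra|]. replace (c * (IZR z / c)) with (IZR z) by (field; lra). lra.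
      - apply (Rmult_le_reg_l c); [lra|]. replace (c * (IZR z / c)) with (IZR z) by (field; lra). lra. }
    assert (Ht1' : 0 <= t1' <= 1).
    { apply tau_ok; auto. fold lo hi. split.
      - apply (Rmult_le_reg_l c); [lra|]. replace (c * ((IZR z + 1) / c)) with (IZR z + 1) by (field; lra). lra.
      - apply (Rmult_le_reg_l c); [lra|]. replace (c * ((IZR z + 1) / c)) with (IZR z + 1) by (field; lra). lra. }
    set (tau := t0' + lam * (t1' - t0')).
    assert (Hct : c * (fst A + tau * dx) = IZR z + lam).
    { transitivity (c * (fst A + t0' * dx) + lam * (c * (fst A + t1' * dx) - c * (fst A + t0' * dx))).
      unfold tau; ring. fold dx c in H0', H1'. rewrite H0', H1'. ring. }
    exists (J eta xi (Pt A B tau)). split.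
    + exists (J eta xi (Pt A B t0'), J eta xi (Pt A B t1')). split.
      * exists A, B, z, t0', t1'. repeat split; auto; lra.
      * exists lam. split; [exact Hlam|]. cbn [fst snd].
        rewrite (keyJ eta xi A B z t0' t1' lam H0' H1' Hlam). reflexivity.
    + assert (Hp : J eta xi (Pt A B tau) = (fst A + tau * dx, snd A + tau * dy + eta * t)).
      { unfold J, Pt. cbn [fst snd]. fold dx dy.
        rewrite (phi_lin xi z (fst A + tau * dx)) by (fold c; lra).
        fold sg. f_equal.
        assert (E : 4 * INR xi * (fst A + tau * dx) = 2 * (IZR z + lam)) by (rewrite <- Hct; unfold c; ring).
        rewrite E. unfold lam.
        replace (sg * (2 * (IZR z + (1 + sg * t) / 2) - 2 * IZR z - 1)) with ((sg * sg) * t) by field.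
        unfold sg. rewrite sig_sq. ring. }
      rewrite Hp, Hy. subst g. unfold dist2 in *. cbn [fst snd] in *.
      fold dx dy in Hd.
      replace (fst A + tau * dx - (fst x + t * 0)) with ((tau - t0) * dx + (fst A + t0 * dx - fst x)) by ring.
      replace (snd A + tau * dy + eta * t - (snd x + t * eta)) with ((tau - t0) * dy + (snd A + t0 * dy - snd x)) by ring.
      eapply Rle_lt_trans; [apply minkowski|].
      assert (Hs : sqrt (((tau - t0) * dx) ^ 2 + ((tau - t0) * dy) ^ 2) < eps').
      { eapply Rle_lt_trans; [apply sqrt_sum_le|].
        set (e := (tau - t0) * dx).
        assert (Hey : Rabs ((tau - t0) * dy) <= M * Rabs e).
        { unfold e. rewrite !Rabs_mult. pose proof (Rabs_pos (tau - t0)). nra. }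
        assert (Hce : Rabs (c * e) <= 2).
        { replace (c * e) with ((IZR z + lam) - c * u) by (rewrite <- Hct; unfold e, u; ring).
          unfold Rabs; destruct (Rcase_abs (IZR z + lam - c * u)); lra. }
        rewrite Rabs_mult, (Rabs_right c) in Hce by lra.
        pose proof (Rabs_pos e).
        assert (INR xi * Rabs e <= 1) by (unfold c in Hce; lra).
        assert (Q : Rabs e * (1 + M) * INR xi < eps' * INR xi) by nra.
        apply Rmult_lt_reg_r in Q; [|lra]. lra. }
      fold u. lra.
  - intros s [A [B [z [t0 [t1 [HF [_ [_ [H0 [H1 Hs]]]]]]]]]]. subst s.
    destruct (slope_part eta xi A B z t0 t1 M Hxi1 ltac:(rewrite Heta; lra) H0 H1 (Hsl _ HF))
      as [S1 _].
    unfold slope_abs_gt. right. cbv zeta. rewrite Heta in S1. lra.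
  - intros s [A [B [z [t0 [t1 [HF [_ [_ [H0 [H1 Hs]]]]]]]]]]. subst s.
    destruct (slope_part eta xi A B z t0 t1 M Hxi1 ltac:(rewrite Heta; lra) H0 H1 (Hsl _ HF))
      as [_ S2].
    exact S2.
Qed.
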